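(* Let $A$ be an $n\times n$ binary matrix with zero diagonal and $\widetilde A=A+I_n$. Let $f=\mathbf{F}(j_1,\dots,j_s)$ be a proper face of $\mathcal{C}^n$ with $1\le|j_1|<\dots<|j_s|\le n$. Then the face family $\widehat f$ of $f$ in $\mathcal{F}_A$ consists of exactly $2^d$ faces, where $d=\mathrm{rank}_{\mathbb{Z}_2}\big(\widetilde A^{|j_1|\cdots|j_s|}_{|j_1|\cdots|j_s|}\big)$.
   Context: $[\pm n]=\{\pm1,\dots,\pm n\}$, $\mathcal{C}^n=\{x\in\mathbb{R}^n: -\tfrac14\le x_i\le\tfrac14\}$; $\mathbf{F}(i)$, $\mathbf{F}(-i)$ ($1\le i\le n$) are the facets in $\{x_i=\tfrac14\}$, $\{x_i=-\tfrac14\}$, and $\mathbf{F}(j_1,\dots,j_s)=\bigcap_i\mathbf{F}(j_i)$ for $j_i$ with distinct absolute values. Binary matrices have entries in $\mathbb{Z}_2$; $A^i_k$ denotes the $(i,k)$ entry viewed as $0$ or $1$. For $1\le a_1<\dots<a_s\le n$, $\widetilde A^{a_1\cdots a_s}_{a_1\cdots a_s}$ is the $s\times s$ principal submatrix of $\widetilde A$ on rows and columns $a_1,\dots,a_s$. $\mathcal{F}_A$ pairs $\mathbf{F}(j)$ with $\mathbf{F}(-j)$ via $\tau^A_j:\mathbf{F}(j)\to\mathbf{F}(-j)$, $\tau^A_j(x)=y$ with $y_{|j|}=-x_{|j|}$ and $y_k=(-1)^{A^{|j|}_k}x_k$ for $k\ne|j|$. A composition $\tau^A_{k_m}\circ\dots\circ\tau^A_{k_1}$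 applied to a proper face $f$ is valid if $f\subset\mathbf{F}(k_1)$ and $\tau^A_{k_i}\circ\dots\circ\tau^A_{k_1}(f)\subset\mathbf{F}(k_{i+1})$ for $1\le i<m$ ($m=0$ allowed). The face family $\widehat f$ is the set of faces $\tau^A_{k_m}\circ\dots\circ\tau^A_{k_1}(f)$ over all valid compositions. *)

(* Defs.v *)
From HB Require Import structures.
From mathcomp Require Import all_boot all_order all_algebra.
Set Implicit Arguments. Unset Strict Implicit. Unset Printing Implicit Defensive.
Import Order.TTheory GRing.Theory Num.Theory.
Local Open Scope ring_scope.

(* Points of R^n, as functions 'I_n -> R (coordinate i+1 is index i). *)
Definition point (R : realFieldType) (n : nat) := 'I_n -> R.
Definition pset (R : realFieldType) (n : nat) := point R n -> Prop.

(* A signed index j in [+-n] is a pair (k, b): |j| = k+1, sign positive iff b. *)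
Definition sidx (n : nat) := ('I_n * bool)%type.

Definition quarter (R : realFieldType) : R := (4%:R)^-1.

Definition cube (R : realFieldType) (n : nat) : pset R n :=
  fun x => forall i, - quarter R <= x i <= quarter R.

Definition sval (R : realFieldType) (b : bool) : R :=
  if b then quarter R else - quarter R.

Definition facet (R : realFieldType) (n : nat) (j : sidx n) : pset R n :=
  fun x => cube x /\ x j.1 = sval R j.2.

Definition faceF (R : realFieldType) (n : nat) (J : seq (sidx n)) : pset R n :=
  fun x => cube x /\ (forall j, j \in J -> x j.1 = sval R j.2).

(* The map tau^A_j (given by its formula, on all of R^n). *)
Definition tau (R : realFieldType) (n : nat) (A : 'M['F_2]_n) (j : sidx n)
  (x : point R n) : point R n :=
  fun k => if k == j.1 then - x k
           else if A j.1 k == 1 then - x k else x k.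

Definition imgset (R : realFieldType) (n : nat) (f : pset R n)
  (g : point R n -> point R n) : pset R n :=
  fun y => exists2 x, f x & y = g x.

(* Apply the composition tau_{k_m} o ... o tau_{k_1} (ks = [k_1; ...; k_m]) to f. *)
Definition apply_taus (R : realFieldType) (n : nat) (A : 'M['F_2]_n)
  (f : pset R n) (ks : seq (sidx n)) : pset R n :=
  foldl (fun g k => imgset g (tau A k)) f ks.

Fixpoint valid_comp (R : realFieldType) (n : nat) (A : 'M['F_2]_n)
  (f : pset R n) (ks : seq (sidx n)) : Prop :=
  match ks with
  | [::] => True
  | k :: ks' => (forall x, f x -> facet k x) /\ valid_comp A (imgset f (tau A k)) ks'
  end.

Definition face_family (R : realFieldType) (n : nat) (A : 'M['F_2]_n)
  (f : pset R n) (g : pset R n) : Prop :=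
  exists ks, valid_comp A f ks /\ (forall x, g x <-> apply_taus A f ks x).

Definition principal_submx (n : nat) (M : 'M['F_2]_n) (S : {set 'I_n}) :
  'M['F_2]_#|S| :=
  \matrix_(a < #|S|, b < #|S|) M (enum_val a) (enum_val b).

(* Main.v *)
Require Import Defs.
From HB Require Import structures.
From mathcomp Require Import all_boot all_order all_algebra all_fingroup all_field.
From mathcomp Require Import mxabelem.
From mathcomp Require Import lra.
From Stdlib Require Import FunctionalExtensionality PropExtensionality.
Import Order.TTheory GRing.Theory Num.Theory.
Import Defs.
Local Open Scope ring_scope.

Lemma F2_cases (x : 'F_2) : x = 0 \/ x = 1.
Proof. case: x => [[|[|m]]] //= H; [left|right]; exact/val_inj. Qed.

Lemma quarter_gt0 (R : realFieldType) : 0 < quarter R.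
Proof. by rewrite /quarter invr_gt0 ltr0n. Qed.

Lemma sval_inj (R : realFieldType) (b c : bool) : sval R b = sval R c -> b = c.
Proof.
have h := quarter_gt0 R.
by case: b; case: c => //= E; exfalso; lra.
Qed.

Lemma svalN (R : realFieldType) (p q : 'F_2) :
  sval R ((p + q) == 1) = if q == 1 then - sval R (p == 1) else sval R (p == 1).
Proof.
by case: (F2_cases p) => ->; case: (F2_cases q) => -> /=; rewrite ?opprK.
Qed.

Definition face' {R : realFieldType} {n : nat} {S : {set 'I_n}}
  (u : 'rV['F_2]_#|S|) : pset R n :=
  fun x => cube x /\ forall a, x (enum_val a) = sval R (u 0 a == 1).

Definition wit (R : realFieldType) {n : nat} {S : {set 'I_n}}
  (u : 'rV['F_2]_#|S|) : point R n :=
  fun k => if [pick a | enum_val a == k] is Some a then sval R (u 0 a == 1) else 0.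

Lemma wit_val (R : realFieldType) {n : nat} {S : {set 'I_n}} (u : 'rV['F_2]_#|S|) a :
  wit R u (enum_val a) = sval R (u 0 a == 1).
Proof.
rewrite /wit; case: pickP => [b /eqP /enum_val_inj -> //|/(_ a)].
by rewrite eqxx.
Qed.

Lemma wit_face (R : realFieldType) {n : nat} {S : {set 'I_n}} (u : 'rV['F_2]_#|S|) :
  face' u (wit R u).
Proof.
split; last by move=> a; rewrite wit_val.
move=> k; rewrite /wit; have h := quarter_gt0 R.
case: pickP => [b _|_]; last by apply/andP; split; lra.
by case: (u 0 b == 1) => /=; apply/andP; split; lra.
Qed.

Lemma face'_inj (R : realFieldType) {n : nat} {S : {set 'I_n}} (u v : 'rV['F_2]_#|S|) :
  (forall x, @face' R n S u x <-> face' v x) -> u = v.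
Proof.
move=> E; have [_ H] := (E _).1 (wit_face R u).
apply/rowP => a; have := H a; rewrite wit_val => /sval_inj.
by case: (F2_cases (u 0 a)) => ->; case: (F2_cases (v 0 a)) => ->.
Qed.

Lemma face'_facet (R : realFieldType) {n : nat} {S : {set 'I_n}} (u : 'rV['F_2]_#|S|) (j : sidx n) :
  (forall x, @face' R n S u x -> facet j x) ->
  exists a, j.1 = enum_val a /\ j.2 = (u 0 a == 1).
Proof.
move=> H; have [_] := H _ (wit_face R u).
rewrite /wit; case: pickP => [b /eqP <- E | _ E].
  by exists b; split => //; symmetry; exact: (@sval_inj R _ _ E).
exfalso; have h := quarter_gt0 R; move: E; rewrite /sval; case: j.2 => E; lra.
Qed.

Lemma tau_invol (R : realFieldType) n A j (x : point R n) : tau A j (tau A j x) = x.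
Proof.
apply: functional_extensionality => k; rewrite /tau.
by case: (k == j.1); rewrite ?opprK //; case: (A j.1 k == 1); rewrite ?opprK.
Qed.

Lemma tau_cube (R : realFieldType) n A j (x : point R n) : cube x -> cube (tau A j x).
Proof.
move=> C k; have /andP[h1 h2] := C k; rewrite /tau.
by case: (k == j.1); last case: (A j.1 k == 1); apply/andP; split; lra.
Qed.

Lemma tau_entry (R : realFieldType) n (A : 'M['F_2]_n) (hdiag : forall i, A i i = 0)
  (S : {set 'I_n}) (j : sidx n) (a b : 'I_#|S|) (x : point R n) :
  j.1 = enum_val a ->
  tau A j x (enum_val b) =
  if principal_submx (A + 1%:M) S a b == 1 then - x (enum_val b) else x (enum_val b).
Proof.
move=> ja; rewrite /tau /principal_submx !mxE ja.
case: eqP => [->|ne]; first by rewrite hdiag eqxx add0r.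
have -> : (enum_val a == enum_val b) = false by apply/eqP => E; apply: ne.
by rewrite addr0; case: eqP.
Qed.

Lemma img_face (R : realFieldType) n (A : 'M['F_2]_n) (hdiag : forall i, A i i = 0)
  (S : {set 'I_n}) (u : 'rV['F_2]_#|S|) (j : sidx n) (a : 'I_#|S|) :
  j.1 = enum_val a ->
  imgset (@face' R n S u) (tau A j) = face' (u + row a (principal_submx (A + 1%:M) S)).
Proof.
move=> ja; apply: functional_extensionality => y; apply: propositional_extensionality.
split.
  case=> x [Cx Fx] ->; split; first exact: tau_cube.
  move=> b; rewrite (tau_entry _ _ _ hdiag _ _ _ _ _ ja) !mxE svalN Fx.
  by case: (_ == 1).
case=> Cy Fy; exists (tau A j y); last by rewrite tau_invol.
split; first exact: tau_cube.
move=> b; rewrite (tau_entry _ _ _ hdiag _ _ _ _ _ ja) Fy !mxE svalN.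
by case: (_ == 1); rewrite ?opprK.
Qed.

Lemma apply_taus_rcons (R : realFieldType) n (A : 'M['F_2]_n) (f : pset R n) ks k :
  apply_taus A f (rcons ks k) = imgset (apply_taus A f ks) (tau A k).
Proof. by rewrite /apply_taus -cats1 foldl_cat. Qed.

Lemma valid_rcons (R : realFieldType) n (A : 'M['F_2]_n) ks (f : pset R n) k :
  valid_comp A f ks -> (forall x, apply_taus A f ks x -> facet k x) ->
  valid_comp A f (rcons ks k).
Proof.
elim: ks f => [|k' ks IH] f /=; first by move=> _ H; split.
by case=> H1 H2 H3; split => //; apply: IH.
Qed.

Lemma valid_reach (R : realFieldType) n (A : 'M['F_2]_n) (hdiag : forall i, A i i = 0)
  (S : {set 'I_n}) ks (u : 'rV['F_2]_#|S|) :
  valid_comp A (@face' R n S u) ks ->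
  exists2 v, (v <= principal_submx (A + 1%:M) S)%MS &
    apply_taus A (@face' R n S u) ks = face' (u + v).
Proof.
elim: ks u => [|k ks IH] u /=.
  by move=> _; exists 0; rewrite ?sub0mx ?addr0.
case=> Hf Hv; have [a [ka _]] := face'_facet _ _ _ Hf.
rewrite (img_face _ _ _ hdiag _ _ _ _ ka) in Hv *.
have [v' Hv' ->] := IH _ Hv.
exists (row a (principal_submx (A + 1%:M) S) + v'); last by rewrite addrA.
by rewrite addmx_sub // row_sub.
Qed.

Definition reach (R : realFieldType) {n} (A : 'M['F_2]_n) {S : {set 'I_n}}
  (u0 u : 'rV['F_2]_#|S|) :=
  exists ks, valid_comp A (@face' R n S u0) ks /\ apply_taus A (@face' R n S u0) ks = face' u.

Lemma reach_step (R : realFieldType) n (A : 'M['F_2]_n) (hdiag : forall i, A i i = 0)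
  (S : {set 'I_n}) (u0 u : 'rV['F_2]_#|S|) a :
  reach R A u0 u -> reach R A u0 (u + row a (principal_submx (A + 1%:M) S)).
Proof.
case=> ks [Hv He]; exists (rcons ks (enum_val a, u 0 a == 1)); split.
  apply: valid_rcons => // x; rewrite He; case=> Cx Fx; split => //.
  exact: Fx.
by rewrite apply_taus_rcons He (img_face _ _ _ hdiag _ _ (enum_val a, u 0 a == 1) a erefl).
Qed.

Lemma reach_all (R : realFieldType) n (A : 'M['F_2]_n) (hdiag : forall i, A i i = 0)
  (S : {set 'I_n}) (u0 : 'rV['F_2]_#|S|) (w : 'rV['F_2]_#|S|) :
  reach R A u0 (u0 + w *m principal_submx (A + 1%:M) S).
Proof.
rewrite mulmx_sum_row.
elim: (index_enum _) => [|x s IH].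
  by rewrite big_nil addr0; exists [::]; split.
rewrite big_cons; case: (F2_cases (w 0 x)) => ->.
  by rewrite scale0r add0r.
rewrite scale1r addrCA addrC; exact: reach_step.
Qed.

Lemma sorted_uniq1 n (J : seq (sidx n)) :
  sorted (fun a b : sidx n => (val a.1 < val b.1)%N) J ->
  forall j j', j \in J -> j' \in J -> j.1 = j'.1 -> j = j'.
Proof.
elim: J => [|x s IH] //= Hp j j'.
have Hall : all (fun b : sidx n => (val x.1 < val b.1)%N) s.
  apply: (order_path_min _ Hp) => a b c; apply: ltn_trans.
have Hs := path_sorted Hp.
rewrite !inE => /orP[/eqP->|js] /orP[/eqP->|j's] // E.
- by move/allP: Hall => /(_ _ j's); rewrite E ltnn.
- by move/allP: Hall => /(_ _ js); rewrite E ltnn.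
- exact: IH.
Qed.

Definition u0of {n} (J : seq (sidx n)) : 'rV['F_2]_#|[set j.1 | j in J]| :=
  \row_a (if [pick j in J | j.1 == enum_val a] is Some j then (j.2)%:R else 0).

Lemma faceF_eq (R : realFieldType) n (J : seq (sidx n))
  (hJsort : sorted (fun a b : sidx n => (val a.1 < val b.1)%N) J) :
  faceF J = @face' R n _ (u0of J).
Proof.
apply: functional_extensionality => x; apply: propositional_extensionality.
split.
  case=> Cx Fx; split => // a; rewrite /u0of mxE.
  have := enum_valP a => /imsetP[j jJ ja].
  case: pickP => [j' /andP[j'J /eqP <-]|/(_ j)]; last by rewrite jJ -ja eqxx.
  by rewrite Fx //; case: j'.2.
case=> Cx Fx; split => // j jJ.
have jS : j.1 \in [set j.1 | j in J] by apply: imset_f.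
have := Fx (enum_rank_in jS j.1); rewrite enum_rankK_in // => ->.
rewrite /u0of mxE enum_rankK_in //.
case: pickP => [j' /andP[j'J /eqP E]|/(_ j)]; last by rewrite jJ eqxx.
by rewrite (sorted_uniq1 _ _ hJsort _ _ j'J jJ E); case: j.2.
Qed.

Theorem mainTheorem11 (R : realFieldType) (n : nat) (A : 'M['F_2]_n)
  (J : seq (sidx n))
  (hdiag : forall i, A i i = 0)
  (hJ0 : J != [::])
  (hJsort : sorted (fun a b : sidx n => (val a.1 < val b.1)%N) J) :
  let At := A + 1%:M in
  let d := \rank (principal_submx At [set j.1 | j in J]) in
  exists L : seq (pset R n),
    size L = (2 ^ d)%N /\
    (forall i1 i2, (i1 < size L)%N -> (i2 < size L)%N -> i1 <> i2 ->
       ~ (forall x, nth (fun _ => False) L i1 x <-> nth (fun _ => False) L i2 x)) /\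
    (forall g : pset R n,
       face_family A (faceF J) g <->
       exists i, (i < size L)%N /\ (forall x, g x <-> nth (fun _ => False) L i x)).
Proof.
move=> At d.
set S := [set j.1 | j in J].
set M := principal_submx At S.
set u0 := u0of J.
set E := enum (rowg M).
exists [seq @face' R n S (u0 + v) | v <- E].
have sE : size E = (2 ^ d)%N by rewrite /E -cardE card_rowg card_Fp.
have nthL i : (i < size E)%N ->
    nth (fun _ => False) [seq @face' R n S (u0 + v) | v <- E] i = face' (u0 + nth 0 E i).
  by move=> Hi; rewrite (nth_map 0).
rewrite size_map; split => //; split.
  move=> i1 i2 H1 H2 ne; rewrite !nthL // => Heq.
  have := face'_inj _ _ _ Heq => /addrI /eqP; rewrite nth_uniq ?enum_uniq //.
  by move/eqP.
move=> g; split.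
  case=> ks [Hv Hg]; rewrite faceF_eq // in Hv Hg.
  have [v vM Ev] := valid_reach _ _ _ hdiag _ _ _ Hv.
  have vE : v \in E by rewrite /E mem_enum mem_rowg.
  exists (index v E); split; first by rewrite index_mem.
  by move=> x; rewrite nthL ?index_mem // nth_index // -Ev.
case=> i [Hi Hg].
have vE : nth 0 E i \in E by apply: mem_nth.
move: vE; rewrite /E mem_enum mem_rowg => /submxP [w Ew].
case: (reach_all R n A hdiag S u0 w) => ks [Hv He].
exists ks; split; first by rewrite faceF_eq.
move=> x; rewrite Hg nthL // faceF_eq // He -Ew.
by [].
Qed.
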